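(* Let $0\le\alpha\le\beta$ and let $q=(q_n)$, $q_n\in(0,1)$, satisfy $st-\lim_n q_n=1$, $st-\lim_n q_n^n=a$ $(a<1)$ and $st-\lim_n 1/[n]_{q_n}=0$. Then for every bounded continuous function $f$ on $[0,\infty)$, $$st-\lim_{n\to\infty}\ \big\|\mathfrak{D}_n^{(\alpha,\beta)}(f;q_n;\cdot)-f\big\|_{\rho_0}=0,$$ where $\|g\|_{\rho_0}=\sup_{x\in[0,\infty)}\frac{|g(x)|}{1+x^2}$.
   Context: $q$-calculus notation, for $0<q<1$: $[n]_q=\frac{1-q^n}{1-q}$; $[k]_q!=[k]_q[k-1]_q\cdots[1]_q$ with $[0]_q!=1$; $\left[\begin{array}{c}n\\k\end{array}\right]_q=\frac{[n]_q!}{[k]_q!\,[n-k]_q!}$; $(1+x)_q^m=(1+x)(1+qx)\cdots(1+q^{m-1}x)$ with $(1+x)_q^0=1$. The $q$-exponential is $E_q(z)=\sum_{k=0}^\infty q^{k(k-1)/2}\frac{z^k}{[k]_q!}=\prod_{j=0}^\infty(1+(1-q)q^jz)$. The $q$-Jackson integral is $\int_0^a g(t)\,d_qt=(1-q)a\sum_{j=0}^\infty g(aq^j)q^j$. For $n\in\mathbb N$, $0<q<1$, $x\in[0,\infty)$ define $p^q_{n,k}(x)=\left[\begin{array}{c}n+k-1\\k\end{array}\right]_q q^{k(k-1)/2}\frac{x^k}{(1+x)_q^{n+k}}$ and $s^q_{n,k}(t)=E_q(-[n]_qt)\frac{([n]_qt)^k}{[k]_q!}$. The $q$-Baskakov–Szász–Stancu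 operators with parameters $0\le\alpha\le\beta$ are $$\mathfrak{D}_n^{(\alpha,\beta)}(f;q;x)=[n]_q\sum_{k=0}^\infty p^q_{n,k}(x)\int_0^{q/(1-q^n)} q^{-k-1}s^q_{n,k}(t)\, f\!\left(\frac{[n]_q t q^{-k}+\alpha}{[n]_q+\beta}\right)d_qt .$$ With $q=q_n$, $[n]_q$ means $[n]_{q_n}$. Statistical convergence: for $K\subseteq\mathbb N$, its natural density is $\delta(K)=\lim_n \frac1n|\{j\le n: j\in K\}|$ (if it exists). A real sequence $(x_j)$ is statistically convergent to $L$, written $st-\lim_n x_n=L$, if for every $\epsilon>0$, $\delta(\{j:|x_j-L|\ge\epsilon\})=0$. *)

(* Defs.v *)
From Stdlib Require Import Reals Lra Classical ClassicalDescription ClassicalEpsilon.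
Open Scope R_scope.

(** Value of a real series: its sum if it converges, 0 otherwise
    (all series used below converge under the hypotheses of the paper). *)
Definition series_val (u : nat -> R) : R :=
  match excluded_middle_informative (exists l, infinite_sum u l) with
  | left H => proj1_sig (constructive_indefinite_description _ H)
  | right _ => 0
  end.

Definition qint (q : R) (n : nat) : R := (1 - q ^ n) / (1 - q).

Fixpoint qfact (q : R) (k : nat) : R :=
  match k with
  | O => 1
  | S k' => qint q (S k') * qfact q k'
  end.

Definition qbinom (q : R) (n k : nat) : R :=
  qfact q n / (qfact q k * qfact q (n - k)).

Fixpoint qpoch_plus (q x : R) (m : nat) : R :=
  match m with
  | O => 1
  | S m' => qpoch_plus q x m' * (1 + q ^ m' * x)
  end.

Definition qtri (q : R) (k : nat) : R := q ^ (Nat.div (k * (k - 1)) 2).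

Definition Eq_exp (q z : R) : R :=
  series_val (fun k => qtri q k * z ^ k / qfact q k).

Definition jackson (q a : R) (g : R -> R) : R :=
  (1 - q) * a * series_val (fun j => g (a * q ^ j) * q ^ j).

Definition p_q (q : R) (n k : nat) (x : R) : R :=
  qbinom q (n + k - 1) k * qtri q k * x ^ k / qpoch_plus q x (n + k).

Definition s_q (q : R) (n k : nat) (t : R) : R :=
  Eq_exp q (- (qint q n) * t) * (qint q n * t) ^ k / qfact q k.

Definition D_op (alpha beta : R) (f : R -> R) (q : R) (n : nat) (x : R) : R :=
  qint q n *
  series_val (fun k =>
    p_q q n k x *
    jackson q (q / (1 - q ^ n))
      (fun t => / q ^ (k + 1) * s_q q n k t *
                f ((qint q n * t / q ^ k + alpha) / (qint q n + beta)))).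

Definition indic (P : Prop) : R :=
  if excluded_middle_informative P then 1 else 0.

(** Natural density of K ⊆ ℕ (indices j = 1..n) equals 0. *)
Definition density_zero (K : nat -> Prop) : Prop :=
  Un_cv (fun n => sum_f_R0 (fun j => indic (K (S j))) (pred n) / INR n) 0.

Definition st_cv (x : nat -> R) (L : R) : Prop :=
  forall eps, eps > 0 -> density_zero (fun j => Rabs (x j - L) >= eps).

Definition rho0_norm_lt (g : R -> R) (eps : R) : Prop :=
  exists c, c < eps /\ forall x, 0 <= x -> Rabs (g x) / (1 + x ^ 2) <= c.

Definition bounded_cont_nonneg (f : R -> R) : Prop :=
  (exists M, forall x, 0 <= x -> Rabs (f x) <= M) /\
  (forall x, 0 <= x -> limit1_in f (fun y => 0 <= y) (f x) x).

(* Main.v *)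
Require Import Defs.
From Stdlib Require Import Reals Lra Lia Classical ClassicalDescription ClassicalEpsilon.
From Coquelicot Require Import Coquelicot.
Open Scope R_scope.

Lemma series_val_is (u : nat -> R) (l : R) : is_series u l -> series_val u = l.
Proof.
  intros H. unfold series_val.
  destruct (excluded_middle_informative (exists l0, infinite_sum u l0)) as [H1|H1].
  - destruct (constructive_indefinite_description _ H1) as [l' Hl']; simpl.
    apply is_series_Reals in Hl'. 
    rewrite <- (is_series_unique u l' Hl'). now apply is_series_unique.
  - exfalso. apply H1. exists l. now apply is_series_Reals.
Qed.

Lemma is_series_Rplus (a b : nat -> R) la lb :
  is_series a la -> is_series b lb -> is_series (fun n => a n + b n) (la + lb).
Proof. intros Ha Hb. exact (is_series_plus a b la lb Ha Hb). Qed.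

Lemma is_series_Rscal (c : R) (a : nat -> R) la :
  is_series a la -> is_series (fun n => c * a n) (c * la).
Proof. intros Ha. exact (is_series_scal c a la Ha). Qed.

Lemma is_series_Rext (a b : nat -> R) l :
  (forall n, a n = b n) -> is_series a l -> is_series b l.
Proof. intros H Ha. exact (is_series_ext a b l H Ha). Qed.

Lemma is_series_Rle (a b : nat -> R) la lb :
  is_series a la -> is_series b lb -> (forall n, a n <= b n) -> la <= lb.
Proof.
  intros Ha Hb H.
  assert (Ha' : is_lim_seq (sum_n a) la) by exact Ha.
  assert (Hb' : is_lim_seq (sum_n b) lb) by exact Hb.
  assert (Hs : forall N, sum_n a N <= sum_n b N).
  { intros N. rewrite !sum_n_Reals. apply sum_Rle. intros; apply H. }
  exact (is_lim_seq_le _ _ _ _ Hs Ha' Hb').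
Qed.

Lemma ex_series_Rle (a b : nat -> R) :
  (forall n, Rabs (a n) <= b n) -> ex_series b -> ex_series a.
Proof. intros H Hb. apply (ex_series_le a b); [exact H| exact Hb]. Qed.

Lemma is_series_Rabs_le (a b : nat -> R) la lb :
  is_series a la -> is_series b lb -> (forall n, Rabs (a n) <= b n) -> Rabs la <= lb.
Proof.
  intros Ha Hb H. apply Rabs_le. split.
  - assert (Hn : is_series (fun n => (-1) * b n) ((-1) * lb)) by (apply is_series_Rscal; exact Hb).
    assert ((-1)*lb <= la).
    { apply (is_series_Rle _ _ _ _ Hn Ha). intros n. specialize (H n).
      apply Rabs_le_between in H. lra. }
    lra.
  - apply (is_series_Rle _ _ _ _ Ha Hb). intros n. specialize (H n).
    apply Rabs_le_between in H. lra.
Qed.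

Lemma is_series_from_lim (a : nat -> R) (l : R) :
  is_lim_seq (fun N => sum_f_R0 a N) l -> is_series a l.
Proof.
  intros H. apply (is_lim_seq_ext _ (sum_n a)) in H.
  - exact H.
  - intros N. now rewrite sum_n_Reals.
Qed.

Lemma is_series_shift (a : nat -> R) l :
  is_series (fun k => a (S k)) (l - a O) -> is_series a l.
Proof.
  intros H. apply is_series_decr_1. 
  replace (plus l (opp (a O))) with (l - a O) by (unfold plus, opp; simpl; ring).
  exact H.
Qed.

Lemma is_series_unshift (a : nat -> R) (l:R) :
  is_series a l -> is_series (fun k => a (S k)) (l - a O).
Proof.
  intros H. apply (is_series_incr_1 a (l - a O)).
  unfold plus; simpl. replace (l - a O + a O) with l by ring. exact H.
Qed.

Lemma pow_le_1 x n : 0 <= x <= 1 -> x ^ n <= 1.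
Proof.
  intros Hx. induction n; simpl; [lra|].
  assert (0 <= x ^ n) by (apply pow_le; lra). nra.
Qed.

Lemma pow_le_q x n : 0 <= x <= 1 -> (1 <= n)%nat -> x ^ n <= x.
Proof.
  intros Hx Hn. destruct n as [|n]; [lia|]. simpl.
  assert (x ^ n <= 1) by (apply pow_le_1; lra).
  assert (0 <= x ^ n) by (apply pow_le; lra). nra.
Qed.

Lemma qint_0 q : qint q 0 = 0.
Proof. unfold qint; simpl. replace (1-1) with 0 by ring. unfold Rdiv; ring. Qed.

Lemma qint_S q k : q <> 1 -> qint q (S k) = 1 + q * qint q k.
Proof. intros H. unfold qint; simpl. field. lra. Qed.

Lemma qint_ge1 q k : 0 < q < 1 -> (1 <= k)%nat -> 1 <= qint q k.
Proof.
  intros Hq Hk. unfold qint. apply Rcomplements.Rle_div_r; [lra|].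
  assert (q ^ k <= q) by (apply pow_le_q; [lra|exact Hk]). lra.
Qed.

Lemma qint_le q k : 0 < q < 1 -> qint q k <= / (1 - q).
Proof.
  intros Hq. unfold qint, Rdiv. rewrite Rmult_comm.
  assert (0 <= q ^ k) by (apply pow_le; lra).
  assert (0 < / (1-q)) by (apply Rinv_0_lt_compat; lra). nra.
Qed.

Lemma qint_nonneg q k : 0 < q < 1 -> 0 <= qint q k.
Proof.
  intros Hq. destruct k. rewrite qint_0; lra. 
  assert (1 <= qint q (S k)) by (apply qint_ge1; [lra|lia]). lra.
Qed.

Lemma qfact_S q k : qfact q (S k) = qint q (S k) * qfact q k.
Proof. reflexivity. Qed.

Lemma qfact_ge1 q k : 0 < q < 1 -> 1 <= qfact q k.
Proof.
  intros Hq. induction k; simpl; [lra|].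
  assert (1 <= qint q (S k)) by (apply qint_ge1; [lra|lia]). nra.
Qed.

Lemma qfact_pos q k : 0 < q < 1 -> 0 < qfact q k.
Proof. intros Hq. assert (H:=qfact_ge1 q k Hq). lra. Qed.

Lemma tri_S k : Nat.div (S k * (S k - 1)) 2 = (Nat.div (k * (k - 1)) 2 + k)%nat.
Proof.
  destruct k as [|k]; [reflexivity|].
  replace (S (S k) * (S (S k) - 1))%nat with (S k * (S k - 1) + S k * 2)%nat by (simpl; lia).
  rewrite Nat.div_add by lia. reflexivity.
Qed.

Lemma qtri_S q k : qtri q (S k) = qtri q k * q ^ k.
Proof. unfold qtri. rewrite tri_S, pow_add. reflexivity. Qed.

Lemma qtri_0 q : qtri q 0 = 1.
Proof. reflexivity. Qed.

Lemma qtri_pos q k : 0 < q -> 0 < qtri q k.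
Proof. intros; unfold qtri; apply pow_lt; lra. Qed.

Lemma qtri_le1 q k : 0 < q < 1 -> qtri q k <= 1.
Proof. intros; unfold qtri; apply pow_le_1; lra. Qed.

Lemma qpoch_S q x m : qpoch_plus q x (S m) = qpoch_plus q x m * (1 + q ^ m * x).
Proof. reflexivity. Qed.

Lemma qpoch_ge1 q x m : 0 < q -> 0 <= x -> 1 <= qpoch_plus q x m.
Proof.
  intros Hq Hx. induction m; simpl; [lra|].
  assert (0 <= q ^ m * x) by (apply Rmult_le_pos; [apply pow_le; lra| lra]). nra.
Qed.

Lemma qpoch_pos q x m : 0 < q -> 0 <= x -> 0 < qpoch_plus q x m.
Proof. intros. assert (H1:=qpoch_ge1 q x m H H0). lra. Qed.

(* (q;q)_k = qfact * (1-q)^k *)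
Lemma qfact_pochQ_S q k : q <> 1 ->
  qfact q (S k) * (1 - q) ^ (S k) = qfact q k * (1 - q) ^ k * (1 - q ^ (S k)).
Proof. intros H. rewrite qfact_S. unfold qint. simpl. field. lra. Qed.

Lemma pochQ_le1 q k : 0 < q < 1 -> qfact q k * (1 - q) ^ k <= 1.
Proof.
  intros Hq. induction k; [simpl; lra|].
  rewrite (qfact_pochQ_S q k) by lra.
  assert (0 < q ^ S k) by (apply pow_lt; lra).
  assert (0 <= qfact q k * (1 - q) ^ k).
  { apply Rmult_le_pos. apply Rlt_le, qfact_pos; lra. apply pow_le; lra. }
  nra.
Qed.

Lemma pochQ_mono q k i : 0 < q < 1 -> qfact q (k + i) * (1 - q) ^ (k + i) <= qfact q k * (1 - q) ^ k.
Proof.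
  intros Hq. induction i.
  - rewrite Nat.add_0_r; lra.
  - replace (k + S i)%nat with (S (k + i)) by lia.
    rewrite (qfact_pochQ_S q (k+i)) by lra.
    assert (0 < q ^ S (k+i)) by (apply pow_lt; lra).
    assert (0 <= qfact q (k+i) * (1 - q) ^ (k+i)).
    { apply Rmult_le_pos. apply Rlt_le, qfact_pos; lra. apply pow_le; lra. }
    assert (q ^ S (k+i) <= 1) by (apply pow_le_1; lra).
    nra.
Qed.

Lemma qfact_ratio_le q k i : 0 < q < 1 -> qfact q (k + i) / qfact q k <= / (1 - q) ^ i.
Proof.
  intros Hq. 
  assert (H := pochQ_mono q k i Hq). rewrite pow_add in H.
  assert (0 < qfact q k) by (apply qfact_pos; lra).
  assert (0 < (1-q)^k) by (apply pow_lt; lra).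
  assert (0 < (1-q)^i) by (apply pow_lt; lra).
  apply (Rmult_le_reg_r ((1-q)^i * (qfact q k * (1-q)^k))).
  { apply Rmult_lt_0_compat; auto. apply Rmult_lt_0_compat; auto. }
  replace (/ (1 - q) ^ i * ((1 - q) ^ i * (qfact q k * (1 - q) ^ k))) with (qfact q k * (1 - q) ^ k) by (field; lra).
  replace (qfact q (k + i) / qfact q k * ((1 - q) ^ i * (qfact q k * (1 - q) ^ k)))
    with (qfact q (k + i) * ((1 - q) ^ k * (1 - q) ^ i)) by (field; lra).
  exact H.
Qed.

Lemma le_div_self a P : 0 <= a -> 0 < P <= 1 -> a <= a / P.
Proof.
  intros Ha HP. apply Rcomplements.Rle_div_r; [lra|]. nra.
Qed.

Lemma div_le_self a P : 0 <= a -> 1 <= P -> a / P <= a.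
Proof.
  intros Ha HP. apply Rcomplements.Rle_div_l; [lra|]. nra.
Qed.

Definition Eterm (q z : R) (k : nat) : R := qtri q k * z ^ k / qfact q k.

Lemma Eterm_S q z k : 0 < q < 1 ->
  Eterm q z (S k) = Eterm q z k * (q ^ k * z / qint q (S k)).
Proof.
  intros Hq. unfold Eterm. rewrite qtri_S, qfact_S. simpl.
  assert (0 < qfact q k) by (apply qfact_pos; lra).
  assert (1 <= qint q (S k)) by (apply qint_ge1; [lra|lia]).
  field. split; lra.
Qed.

Lemma Eterm_abs_ex q z : 0 < q < 1 -> ex_series (fun k => Rabs (Eterm q z k)).
Proof.
  intros Hq.
  destruct (Req_dec z 0) as [Hz|Hz].
  - apply ex_series_incr_1. apply (ex_series_ext (fun _ => 0)).
    + intros k. subst z. unfold Eterm. simpl. rewrite Rmult_0_l, Rmult_0_r. unfold Rdiv. rewrite Rmult_0_l, Rabs_R0. reflexivity.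
    + exists 0. apply is_series_from_lim. apply (is_lim_seq_ext (fun _ => 0)).
      * intros N. induction N; simpl; [reflexivity| lra].
      * apply is_lim_seq_const.
  - apply (ex_series_DAlembert _ 0); [lra| |].
    + intros k. unfold Eterm. 
      assert (0 < qtri q k) by (apply qtri_pos; lra).
      assert (0 < qfact q k) by (apply qfact_pos; lra).
      assert (z ^ k <> 0) by (apply pow_nonzero; exact Hz).
      unfold Rdiv. apply Rmult_integral_contrapositive_currified.
      apply Rmult_integral_contrapositive_currified; lra.
      apply Rinv_neq_0_compat; lra.
    + apply (is_lim_seq_le_le (fun _ => 0) _ (fun k => Rabs z * q ^ k)).
      * intros k. split; [apply Rabs_pos|].
        assert (Hk : Eterm q z k <> 0).
        { unfold Eterm. 
          assert (0 < qtri q k) by (apply qtri_pos; lra).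
          assert (0 < qfact q k) by (apply qfact_pos; lra).
          assert (z ^ k <> 0) by (apply pow_nonzero; exact Hz).
          unfold Rdiv. apply Rmult_integral_contrapositive_currified.
          apply Rmult_integral_contrapositive_currified; lra.
          apply Rinv_neq_0_compat; lra. }
        rewrite Eterm_S by exact Hq.
        assert (1 <= qint q (S k)) by (apply qint_ge1; [lra|lia]).
        replace (Eterm q z k * (q ^ k * z / qint q (S k)) / Eterm q z k) with (q ^ k * z / qint q (S k)) by (field; split; [lra| exact Hk]).
        assert (0 < q ^ k) by (apply pow_lt; lra).
        unfold Rdiv. rewrite !Rabs_mult, Rabs_inv, (Rabs_pos_eq (q^k)) by lra.
        rewrite (Rabs_pos_eq (qint q (S k))) by lra.
        assert (0 < / qint q (S k) <= 1).
        { split. apply Rinv_0_lt_compat; lra. 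
          rewrite <- Rinv_1. apply Rinv_le_contravar; lra. }
        assert (0 <= Rabs z) by apply Rabs_pos.
        assert (0 <= q ^ k * Rabs z) by nra.
        assert (q ^ k * Rabs z * / qint q (S k) <= q ^ k * Rabs z) by nra.
        lra.
      * apply is_lim_seq_const.
      * replace (Finite 0) with (Rbar_mult (Rabs z) 0) by (simpl; f_equal; ring).
        apply is_lim_seq_scal_l. apply is_lim_seq_geom. rewrite Rabs_pos_eq; lra.
Qed.

Lemma Eterm_ex q z : 0 < q < 1 -> ex_series (Eterm q z).
Proof. intros Hq. apply ex_series_Rabs. apply Eterm_abs_ex; exact Hq. Qed.

Lemma Eq_exp_Series q z : 0 < q < 1 -> Eq_exp q z = Series (Eterm q z).
Proof.
  intros Hq. unfold Eq_exp. apply series_val_is.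
  apply (is_series_Rext (Eterm q z)); [intros; reflexivity|].
  apply Series_correct, Eterm_ex; exact Hq.
Qed.

Lemma Eq_exp_feq q z : 0 < q < 1 -> Eq_exp q z = (1 + (1 - q) * z) * Eq_exp q (q * z).
Proof.
  intros Hq. rewrite !Eq_exp_Series by exact Hq.
  set (A := Series (Eterm q z)). set (B := Series (Eterm q (q*z))).
  assert (HA : is_series (Eterm q z) A) by (apply Series_correct, Eterm_ex; exact Hq).
  assert (HB : is_series (Eterm q (q*z)) B) by (apply Series_correct, Eterm_ex; exact Hq).
  assert (HD : is_series (fun k => Eterm q z k + (-1) * Eterm q (q*z) k) (A + (-1) * B)).
  { apply is_series_Rplus; [exact HA| apply is_series_Rscal; exact HB]. }
  assert (HD2 : is_series (fun k => Eterm q z k + (-1) * Eterm q (q*z) k) ((1-q) * z * B)).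
  { apply is_series_shift.
    assert (E0 : forall w, Eterm q w 0 = 1) by (intros w; unfold Eterm, qtri; simpl; unfold Rdiv; rewrite Rinv_1; ring).
    rewrite !E0. replace ((1 - q) * z * B - (1 + -1 * 1)) with ((1-q)*z*B) by ring.
    apply (is_series_Rext (fun k => ((1-q)*z) * Eterm q (q*z) k)).
    - intros k. unfold Eterm. rewrite !qtri_S, qfact_S. unfold qint.
      assert (0 < qfact q k) by (apply qfact_pos; lra).
      assert (0 < 1 - q ^ S k). { assert (q ^ S k <= q) by (apply pow_le_q; [lra|lia]). lra. }
      rewrite !Rpow_mult_distr. simpl. simpl in H0. field. repeat split; lra.
    - apply is_series_Rscal; exact HB. }
  assert (Heq := is_series_unique _ _ HD). rewrite (is_series_unique _ _ HD2) in Heq.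
  lra.
Qed.

Lemma Eq_exp_near0 q z : 0 < q < 1 -> Rabs z <= /2 -> Rabs (Eq_exp q z - 1) <= 2 * Rabs z.
Proof.
  intros Hq Hz. rewrite Eq_exp_Series by exact Hq.
  assert (HA : is_series (Eterm q z) (Series (Eterm q z))) by (apply Series_correct, Eterm_ex; exact Hq).
  apply is_series_unshift in HA.
  assert (Hg : is_series (fun k => Rabs z * Rabs z ^ k) (Rabs z * / (1 - Rabs z))).
  { apply is_series_Rscal. apply is_series_geom. rewrite Rabs_Rabsolu. lra. }
  assert (H := is_series_Rabs_le _ _ _ _ HA Hg).
  assert (Rabs (Series (Eterm q z) - Eterm q z 0) <= Rabs z * / (1 - Rabs z)).
  { apply H. intros k. unfold Eterm. 
    assert (0 < qtri q (S k)) by (apply qtri_pos; lra).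
    assert (qtri q (S k) <= 1) by (apply qtri_le1; lra).
    assert (1 <= qfact q (S k)) by (apply qfact_ge1; lra).
    unfold Rdiv. rewrite !Rabs_mult, Rabs_inv, RPow_abs. 
    rewrite (Rabs_pos_eq (qtri q (S k))) by lra. rewrite (Rabs_pos_eq (qfact q (S k))) by lra.
    simpl pow. 
    assert (0 <= Rabs z ^ k) by (apply pow_le, Rabs_pos).
    assert (0 <= Rabs z) by apply Rabs_pos.
    assert (0 < / qfact q (S k) <= 1).
    { split. apply Rinv_0_lt_compat; lra. rewrite <- Rinv_1. apply Rinv_le_contravar; lra. }
    assert (0 <= Rabs z * Rabs z ^ k) by nra.
    assert (qtri q (S k) * (Rabs z * Rabs z ^ k) <= Rabs z * Rabs z ^ k) by nra.
    assert (0 <= qtri q (S k) * (Rabs z * Rabs z ^ k)) by nra.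
    rewrite Rabs_mult, <- RPow_abs.
    set (X := qtri q (S k) * (Rabs z * Rabs z ^ k)) in *.
    assert (X * / qfact q (S k) <= X) by nra. unfold X in *. lra. }
  replace (Eterm q z 0) with 1 in H0 by (unfold Eterm, qtri; simpl; unfold Rdiv; rewrite Rinv_1; ring).
  assert (0 <= Rabs z) by apply Rabs_pos.
  assert (Rabs z * / (1 - Rabs z) <= 2 * Rabs z).
  { apply (Rmult_le_reg_r (1 - Rabs z)); [lra|]. 
    replace (Rabs z * / (1 - Rabs z) * (1 - Rabs z)) with (Rabs z) by (field; lra). nra. }
  lra.
Qed.

Section EE.
Variable Q : R.
Hypothesis HQ : 0 < Q < 1.

Definition zz (j : nat) : R := Q ^ (S j) / (1 - Q).
Definition ee (j : nat) : R := Eq_exp Q (- zz j).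

Lemma ee_rec j : ee j = (1 - Q ^ (S j)) * ee (S j).
Proof.
  unfold ee. rewrite (Eq_exp_feq Q (- zz j)) by exact HQ.
  unfold zz. f_equal.
  - simpl. field. lra.
  - f_equal. simpl. field. lra.
Qed.

Lemma zz_lim : is_lim_seq zz 0.
Proof.
  unfold zz. apply (is_lim_seq_ext (fun j => (Q / (1 - Q)) * Q ^ j)).
  - intros j; simpl; field; lra.
  - replace (Finite 0) with (Rbar_mult (Q / (1-Q)) 0) by (simpl; f_equal; ring).
    apply is_lim_seq_scal_l. apply is_lim_seq_geom. rewrite Rabs_pos_eq; lra.
Qed.

Lemma zz_pos j : 0 < zz j.
Proof. unfold zz. apply Rdiv_lt_0_compat; [apply pow_lt|]; lra. Qed.

Lemma ee_lim : is_lim_seq ee 1.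
Proof.
  apply is_lim_seq_Reals. intros eps Heps.
  assert (Hz := zz_lim). apply is_lim_seq_Reals in Hz.
  destruct (Hz (Rmin (/2) (eps/4))) as [N HN].
  { apply Rmin_pos; lra. }
  exists N. intros j Hj. specialize (HN j Hj). unfold R_dist in *.
  rewrite Rminus_0_r in HN.
  assert (Hm1 := Rmin_l (/2) (eps/4)). assert (Hm2 := Rmin_r (/2) (eps/4)).
  assert (Rabs (- zz j) <= /2) by (rewrite Rabs_Ropp; lra).
  assert (H1 := Eq_exp_near0 Q (- zz j) HQ H).
  unfold ee. rewrite Rabs_Ropp in H1. lra.
Qed.

Lemma ee_pos j : 0 < ee j.
Proof.
  destruct (Rlt_or_le 0 (ee j)) as [H|H]; [exact H|exfalso].
  assert (Hm : forall m, ee (j + m) <= 0).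
  { induction m. rewrite Nat.add_0_r; exact H.
    assert (E := ee_rec (j + m)).
    replace (j + S m)%nat with (S (j + m)) by lia.
    assert (0 < 1 - Q ^ S (j + m)).
    { assert (Q ^ S (j+m) <= Q) by (apply pow_le_q; [lra|lia]). lra. }
    destruct (Rle_or_lt (ee (S (j + m))) 0) as [h|h]; [exact h|]. nra. }
  assert (L := ee_lim). apply is_lim_seq_Reals in L.
  destruct (L (/2)) as [N HN]; [lra|].
  specialize (HN (j + N)%nat ltac:(lia)). specialize (Hm N).
  unfold R_dist in HN. apply Rabs_def2 in HN. lra.
Qed.

Lemma ee_mono j : ee j <= ee (S j).
Proof.
  rewrite (ee_rec j) at 1. assert (H := ee_pos (S j)).
  assert (0 < Q ^ S j) by (apply pow_lt; lra). nra.
Qed.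

Lemma ee_le1 j : ee j <= 1.
Proof.
  destruct (Rle_or_lt (ee j) 1) as [H|H]; [exact H|exfalso].
  assert (Hm : forall m, ee j <= ee (j + m)).
  { induction m. rewrite Nat.add_0_r; lra.
    replace (j + S m)%nat with (S (j + m)) by lia.
    assert (h := ee_mono (j+m)). lra. }
  assert (L := ee_lim). apply is_lim_seq_Reals in L.
  destruct (L (ee j - 1)) as [N HN]; [lra|].
  specialize (HN (j + N)%nat ltac:(lia)). specialize (Hm N).
  unfold R_dist in HN. apply Rabs_def2 in HN. lra.
Qed.

Lemma geom_ee_ex r : 0 <= r < 1 -> ex_series (fun j => r ^ j * ee j).
Proof.
  intros Hr. apply (ex_series_Rle _ (fun j => r ^ j)).
  - intros j. assert (h1 := ee_pos j). assert (h2 := ee_le1 j).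
    assert (0 <= r ^ j) by (apply pow_le; lra).
    rewrite Rabs_pos_eq by nra. nra.
  - exists (/ (1 - r)). apply is_series_geom. rewrite Rabs_pos_eq; lra.
Qed.

Lemma geom_ee_ex1 r : 0 <= r < 1 -> ex_series (fun j => r ^ j * ee (S j)).
Proof.
  intros Hr. apply (ex_series_Rle _ (fun j => r ^ j)).
  - intros j. assert (h1 := ee_pos (S j)). assert (h2 := ee_le1 (S j)).
    assert (0 <= r ^ j) by (apply pow_le; lra).
    rewrite Rabs_pos_eq by nra. nra.
  - exists (/ (1 - r)). apply is_series_geom. rewrite Rabs_pos_eq; lra.
Qed.

Definition GG (r : R) : R := Series (fun j => r ^ j * ee j).

Lemma GG_shift r : 0 <= r < 1 -> GG r = ee 0 + r * Series (fun j => r ^ j * ee (S j)).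
Proof.
  intros Hr. unfold GG. 
  assert (H := Series_correct _ (geom_ee_ex r Hr)).
  apply is_series_unshift in H.
  assert (H2 : is_series (fun j => r * (r ^ j * ee (S j))) (r * Series (fun j => r ^ j * ee (S j)))).
  { apply is_series_Rscal. apply Series_correct, geom_ee_ex1; exact Hr. }
  assert (E : Series (fun j => r ^ j * ee j) - r ^ 0 * ee 0 = r * Series (fun j => r ^ j * ee (S j))).
  { apply (is_series_unique _ _) in H. rewrite <- H. apply is_series_unique.
    apply (is_series_Rext _ _ _ (fun j => eq_sym (Rmult_assoc _ _ _))) in H2. exact H2. }
  simpl in E. lra.
Qed.

Lemma GG_rec r : 0 < r < 1 -> GG (r * Q) = (1 - r) * GG r.
Proof.
  intros Hr.
  assert (Hr1 : 0 <= r < 1) by lra.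
  assert (HrQ : 0 <= r * Q < 1) by nra.
  set (X := Series (fun j => r ^ j * ee (S j))).
  set (Y := Series (fun j => (r * Q) ^ j * ee (S j))).
  assert (E1 := GG_shift r Hr1). assert (E2 := GG_shift (r*Q) HrQ). fold X in E1. fold Y in E2.
  assert (E3 : GG r = X - Q * Y).
  { unfold GG. apply is_series_unique.
    apply (is_series_Rext (fun j => r ^ j * ee (S j) + (-Q) * ((r*Q)^j * ee (S j)))).
    - intros j. rewrite (ee_rec j). rewrite Rpow_mult_distr. simpl. ring.
    - replace (X - Q * Y) with (X + (-Q) * Y) by ring.
      apply is_series_Rplus. apply Series_correct, geom_ee_ex1; exact Hr1.
      apply is_series_Rscal. apply Series_correct, geom_ee_ex1; exact HrQ. }
  assert (0 < Q * r) by nra.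
  assert (E4 : r * GG r = r * X - r * Q * Y) by (rewrite E3; ring).
  assert (E5 : GG (r * Q) = GG r - r * GG r) by lra.
  rewrite E5. ring.
Qed.

Lemma GG_Q : GG Q = 1.
Proof.
  assert (HQ1 : 0 <= Q < 1) by lra.
  assert (Ht : is_series (fun j => ee j - ee (S j)) (ee 0 - 1)).
  { apply is_series_from_lim.
    apply (is_lim_seq_ext (fun N => ee 0 - ee (S N))).
    - intros N. induction N; simpl; [ring|]. rewrite <- IHN. ring.
    - apply is_lim_seq_minus'. apply is_lim_seq_const.
      apply (is_lim_seq_incr_1 ee 1). exact ee_lim. }
  assert (H := Series_correct _ (geom_ee_ex Q HQ1)).
  apply is_series_unshift in H.
  assert (H2 : is_series (fun j => ee j - ee (S j)) (-(GG Q - ee 0))).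
  { unfold GG. apply (is_series_Rext (fun j => (-1) * (Q ^ S j * ee (S j)))).
    - intros j. rewrite (ee_rec j). ring.
    - simpl in H. rewrite Rmult_1_l in H.
      replace (- (Series (fun j : nat => Q ^ j * ee j) - ee 0)) with ((-1) * (Series (fun j : nat => Q ^ j * ee j) - ee 0)) by ring.
      apply is_series_Rscal. exact H. }
  assert (E := is_series_unique _ _ Ht). rewrite (is_series_unique _ _ H2) in E. lra.
Qed.

Lemma GG_T k : GG (Q ^ (S k)) = (1 - Q) ^ k * qfact Q k.
Proof.
  induction k.
  - simpl. rewrite Rmult_1_r. rewrite GG_Q. ring.
  - replace (Q ^ S (S k)) with (Q ^ S k * Q) by (simpl; ring).
    rewrite GG_rec. rewrite IHk. rewrite qfact_S. unfold qint. simpl. field. lra.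
    split. apply pow_lt; lra. assert (Q ^ S k <= Q) by (apply pow_le_q; [lra|lia]). lra.
Qed.

End EE.

Section Bask.
Variable Q x : R.
Hypothesis HQ : 0 < Q < 1.
Hypothesis Hx : 0 <= x.

Definition PB (m k : nat) : R :=
  qfact Q (m + k) / (qfact Q k * qfact Q m) * qtri Q k * x ^ k / qpoch_plus Q x (S m + k).

Lemma p_q_PB m k : p_q Q (S m) k x = PB m k.
Proof.
  unfold p_q, PB, qbinom.
  replace (S m + k - 1)%nat with (m + k)%nat by lia.
  replace (m + k - k)%nat with m by lia. reflexivity.
Qed.

Definition tau (m K : nat) : R :=
  qfact Q (K + m) / (qfact Q K * qfact Q m) * qtri Q (S K) * Q ^ m * x ^ (S K) / qpoch_plus Q x (S K + m).

Ltac pos_facts :=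
  repeat match goal with
  | |- context [qfact Q ?k] => 
      let h := fresh "hf" in assert (h : 0 < qfact Q k) by (apply qfact_pos; lra);
      generalize dependent h; generalize (qfact Q k); intros
  end.

Lemma I1 K : PB 0 (S K) = tau 0 K - tau 0 (S K).
Proof.
  unfold PB, tau. rewrite !Nat.add_0_r. rewrite Nat.add_0_l.
  replace (S 0 + S K)%nat with (S (S K)) by lia.
  rewrite (qpoch_S Q x (S K)). rewrite (qtri_S Q (S K)). rewrite (qfact_S Q K).
  assert (0 < qpoch_plus Q x (S K)) by (apply qpoch_pos; lra).
  assert (0 < qfact Q K) by (apply qfact_pos; lra).
  assert (1 <= qint Q (S K)) by (apply qint_ge1; [lra|lia]).
  assert (0 < 1 + Q ^ S K * x).
  { assert (0 <= Q ^ S K * x) by (apply Rmult_le_pos; [apply pow_le|]; lra). lra. }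
  simpl qfact. simpl pow in *. field. repeat split; lra.
Qed.

Lemma I2 m K : PB (S m) (S K) = PB m (S K) + tau (S m) K - tau (S m) (S K).
Proof.
  unfold PB, tau.
  replace (S m + S K)%nat with (S (S (m + K))) by lia.
  replace (m + S K)%nat with (S (m + K)) by lia.
  replace (K + S m)%nat with (S (m + K)) by lia.
  replace (S K + S m)%nat with (S (S (m + K))) by lia.
  replace (S (S m) + S K)%nat with (S (S (S (m + K)))) by lia.
  replace (S (S K) + S m)%nat with (S (S (S (m + K)))) by lia.
  rewrite (qpoch_S Q x (S (S (m + K)))).
  rewrite (qfact_S Q (S (m + K))), (qfact_S Q K), (qfact_S Q m).
  rewrite (qtri_S Q (S K)).
  assert (0 < qpoch_plus Q x (S (S (m+K)))) by (apply qpoch_pos; lra).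
  assert (0 < qfact Q K) by (apply qfact_pos; lra).
  assert (0 < qfact Q m) by (apply qfact_pos; lra).
  assert (0 < qfact Q (S (m+K))) by (apply qfact_pos; lra).
  assert (1 <= qint Q (S K)) by (apply qint_ge1; [lra|lia]).
  assert (1 <= qint Q (S m)) by (apply qint_ge1; [lra|lia]).
  assert (0 < 1 + Q ^ S (S (m + K)) * x).
  { assert (0 <= Q ^ S (S (m+K)) * x) by (apply Rmult_le_pos; [apply pow_le|]; lra). lra. }
  assert (0 < Q ^ m) by (apply pow_lt; lra). assert (Q ^ m <= 1) by (apply pow_le_1; lra).
  assert (0 < Q ^ K) by (apply pow_lt; lra). assert (Q ^ K <= 1) by (apply pow_le_1; lra).
  unfold qint in *. simpl pow in *. rewrite !pow_add in *.
  field. repeat split; try lra; nra.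
Qed.

Lemma I3 m : PB (S m) 0 = PB m 0 - tau (S m) 0.
Proof.
  unfold PB, tau. rewrite !Nat.add_0_r. replace (S (S m) + 0)%nat with (S (S m)) by lia.
  replace (S m + 0)%nat with (S m) by lia. replace (1 + S m)%nat with (S (S m)) by lia.
  rewrite (qpoch_S Q x (S m)).
  assert (0 < qpoch_plus Q x (S m)) by (apply qpoch_pos; lra).
  assert (0 < qfact Q (S m)) by (apply qfact_pos; lra).
  assert (0 < 1 + Q ^ S m * x).
  { assert (0 <= Q ^ S m * x) by (apply Rmult_le_pos; [apply pow_le|]; lra). lra. }
  assert (0 < qfact Q m) by (apply qfact_pos; lra).
  assert (1 <= qint Q (S m)) by (apply qint_ge1; [lra|lia]).
  unfold qtri; simpl qfact; simpl pow in *. field. repeat split; lra.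
Qed.

Lemma I0 : PB 0 0 = 1 - tau 0 0.
Proof.
  unfold PB, tau, qtri. simpl.
  assert (0 < 1 + 1 * x) by lra. field. lra.
Qed.

Lemma PB_partial m K : sum_f_R0 (PB m) K = 1 - sum_f_R0 (fun i => tau i K) m.
Proof.
  revert K. induction m; intros K.
  - induction K.
    + simpl. apply I0.
    + simpl. simpl in IHK. rewrite IHK. rewrite I1. ring.
  - induction K.
    + simpl. rewrite I3. specialize (IHm 0%nat). simpl in IHm. rewrite IHm. ring.
    + assert (H1 := IHm K). assert (H2 := IHm (S K)).
      simpl sum_f_R0 in *. rewrite IHK. rewrite I2.
      simpl in H2. lra.
Qed.

Lemma trix_lim : is_lim_seq (fun k => qtri Q k * x ^ k) 0.
Proof.
  assert (HE := ex_series_lim_0 _ (Eterm_ex Q (x / (1 - Q)) HQ)).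
  apply (is_lim_seq_le_le (fun _ => 0) _ (Eterm Q (x / (1-Q)))).
  - intros k. 
    assert (0 < qtri Q k) by (apply qtri_pos; lra).
    assert (0 <= x ^ k) by (apply pow_le; lra).
    assert (0 < qfact Q k) by (apply qfact_pos; lra).
    assert (0 < (1-Q)^k) by (apply pow_lt; lra).
    assert (Hp := pochQ_le1 Q k HQ).
    unfold Eterm. split; [nra|].
    replace (qtri Q k * (x / (1 - Q)) ^ k / qfact Q k) with ((qtri Q k * x ^ k) / (qfact Q k * (1 - Q) ^ k)).
    + apply le_div_self; [nra|]. split; [nra|exact Hp].
    + unfold Rdiv. rewrite Rpow_mult_distr, pow_inv. field. lra.
  - apply is_lim_seq_const.
  - exact HE.
Qed.

Lemma tau_nonneg m K : 0 <= tau m K.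
Proof.
  unfold tau.
  assert (0 < qfact Q (K+m)) by (apply qfact_pos; lra).
  assert (0 < qfact Q K) by (apply qfact_pos; lra).
  assert (0 < qfact Q m) by (apply qfact_pos; lra).
  assert (0 < qtri Q (S K)) by (apply qtri_pos; lra).
  assert (0 < Q ^ m) by (apply pow_lt; lra).
  assert (0 <= x ^ S K) by (apply pow_le; lra).
  assert (0 < qpoch_plus Q x (S K + m)) by (apply qpoch_pos; lra).
  apply Rmult_le_pos; [|apply Rlt_le, Rinv_0_lt_compat; lra].
  apply Rmult_le_pos; [|lra].
  apply Rmult_le_pos; [|lra].
  apply Rmult_le_pos; [|lra].
  apply Rlt_le, Rdiv_lt_0_compat; [lra|]. nra.
Qed.

Lemma tau_le m K : tau m K <= / (1 - Q) ^ m * (qtri Q (S K) * x ^ (S K)).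
Proof.
  unfold tau.
  assert (0 < qfact Q (K+m)) by (apply qfact_pos; lra).
  assert (0 < qfact Q K) by (apply qfact_pos; lra).
  assert (1 <= qfact Q m) by (apply qfact_ge1; lra).
  assert (0 < qtri Q (S K)) by (apply qtri_pos; lra).
  assert (0 < Q ^ m) by (apply pow_lt; lra).
  assert (Q ^ m <= 1) by (apply pow_le_1; lra).
  assert (0 <= x ^ S K) by (apply pow_le; lra).
  assert (1 <= qpoch_plus Q x (S K + m)) by (apply qpoch_ge1; lra).
  assert (Hr := qfact_ratio_le Q K m HQ).
  set (c := qtri Q (S K) * x ^ S K). assert (0 <= c) by (unfold c; nra).
  set (r := qfact Q (K + m) / qfact Q K) in *.
  assert (0 <= r) by (unfold r; apply Rlt_le, Rdiv_lt_0_compat; lra).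
  replace (qfact Q (K + m) / (qfact Q K * qfact Q m) * qtri Q (S K) * Q ^ m * x ^ S K /
    qpoch_plus Q x (S K + m)) with (r * c * (Q ^ m / (qfact Q m * qpoch_plus Q x (S K + m))))
    by (unfold r, c; field; repeat split; lra).
  assert (0 <= Q ^ m / (qfact Q m * qpoch_plus Q x (S K + m)) <= 1).
  { split. apply Rlt_le, Rdiv_lt_0_compat; [lra| nra].
    apply (Rle_trans _ (Q ^ m)). apply div_le_self; [lra|nra]. lra. }
  assert (r * c <= / (1 - Q) ^ m * c) by nra.
  assert (0 <= r * c) by nra. nra.
Qed.

Lemma tau_lim m : is_lim_seq (fun K => tau m K) 0.
Proof.
  apply (is_lim_seq_le_le (fun _ => 0) _ (fun K => / (1 - Q) ^ m * (qtri Q (S K) * x ^ (S K)))).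
  - intros K. split; [apply tau_nonneg| apply tau_le].
  - apply is_lim_seq_const.
  - replace (Finite 0) with (Rbar_mult (/ (1 - Q) ^ m) 0) by (simpl; f_equal; ring).
    apply is_lim_seq_scal_l. apply (is_lim_seq_incr_1 (fun k => qtri Q k * x ^ k)). exact trix_lim.
Qed.

Lemma sumtau_lim m : is_lim_seq (fun K => sum_f_R0 (fun i => tau i K) m) 0.
Proof.
  induction m.
  - simpl. apply tau_lim.
  - simpl. replace (Finite 0) with (Finite (0 + 0)) by (f_equal; ring).
    apply is_lim_seq_plus'. exact IHm. apply tau_lim.
Qed.

Lemma PB_series m : is_series (PB m) 1.
Proof.
  apply is_series_from_lim.
  apply (is_lim_seq_ext (fun K => 1 - sum_f_R0 (fun i => tau i K) m)).
  - intros K. symmetry. apply PB_partial.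
  - replace (Finite 1) with (Finite (1 - 0)) by (f_equal; ring).
    apply is_lim_seq_minus'. apply is_lim_seq_const. apply sumtau_lim.
Qed.

Lemma PB_nonneg m k : 0 <= PB m k.
Proof.
  unfold PB.
  assert (0 < qfact Q (m+k)) by (apply qfact_pos; lra).
  assert (0 < qfact Q k) by (apply qfact_pos; lra).
  assert (0 < qfact Q m) by (apply qfact_pos; lra).
  assert (0 < qtri Q k) by (apply qtri_pos; lra).
  assert (0 <= x ^ k) by (apply pow_le; lra).
  assert (0 < qpoch_plus Q x (S m + k)) by (apply qpoch_pos; lra).
  apply Rmult_le_pos; [|apply Rlt_le, Rinv_0_lt_compat; lra].
  apply Rmult_le_pos; [|lra].
  apply Rmult_le_pos; [|lra].
  apply Rlt_le, Rdiv_lt_0_compat; [lra|]. nra.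
Qed.

Definition b1 (k : nat) : R := Q * qint Q k / Q ^ k.
Definition b2 (k : nat) : R := Q ^ 2 * qint Q k * (qint Q k - 1) / (Q ^ k) ^ 2.

Lemma Ib1 m k : PB m (S k) * b1 (S k) = qint Q (S m) * x * PB (S m) k.
Proof.
  unfold PB, b1.
  replace (m + S k)%nat with (S (m + k)) by lia.
  replace (S m + k)%nat with (S (m + k)) by lia.
  replace (S m + S k)%nat with (S (S (m + k))) by lia.
  replace (S (S m) + k)%nat with (S (S (m + k))) by lia.
  rewrite (qfact_S Q k), (qfact_S Q m), (qtri_S Q k).
  assert (0 < qpoch_plus Q x (S (S (m+k)))) by (apply qpoch_pos; lra).
  assert (0 < qfact Q k) by (apply qfact_pos; lra).
  assert (0 < qfact Q m) by (apply qfact_pos; lra).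
  assert (1 <= qint Q (S k)) by (apply qint_ge1; [lra|lia]).
  assert (1 <= qint Q (S m)) by (apply qint_ge1; [lra|lia]).
  assert (0 < Q ^ k) by (apply pow_lt; lra).
  simpl pow. field. repeat split; lra.
Qed.

Lemma Ib2 m k : PB m (S (S k)) * b2 (S (S k)) = qint Q (S m) * qint Q (S (S m)) * x ^ 2 * PB (S (S m)) k.
Proof.
  unfold PB, b2.
  replace (m + S (S k))%nat with (S (S (m + k))) by lia.
  replace (S (S m) + k)%nat with (S (S (m + k))) by lia.
  replace (S m + S (S k))%nat with (S (S (S (m + k)))) by lia.
  replace (S (S (S m)) + k)%nat with (S (S (S (m + k)))) by lia.
  rewrite (qfact_S Q (S k)), (qfact_S Q k), (qfact_S Q (S m)), (qfact_S Q m), (qtri_S Q (S k)), (qtri_S Q k).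
  assert (0 < qpoch_plus Q x (S (S (S (m+k))))) by (apply qpoch_pos; lra).
  assert (0 < qfact Q k) by (apply qfact_pos; lra).
  assert (0 < qfact Q m) by (apply qfact_pos; lra).
  assert (1 <= qint Q (S k)) by (apply qint_ge1; [lra|lia]).
  assert (1 <= qint Q (S m)) by (apply qint_ge1; [lra|lia]).
  assert (1 <= qint Q (S (S k))) by (apply qint_ge1; [lra|lia]).
  assert (1 <= qint Q (S (S m))) by (apply qint_ge1; [lra|lia]).
  assert (0 < Q ^ k) by (apply pow_lt; lra).
  assert (E : qint Q (S (S k)) - 1 = Q * qint Q (S k)) by (rewrite (qint_S Q (S k)) by lra; ring).
  rewrite E.
  simpl pow. field. repeat split; lra.
Qed.

Lemma PB_b1 m : is_series (fun k => PB m k * b1 k) (qint Q (S m) * x).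
Proof.
  apply is_series_shift.
  replace (qint Q (S m) * x - PB m 0 * b1 0) with ((qint Q (S m) * x) * 1)
    by (unfold b1; rewrite qint_0; simpl; field).
  apply (is_series_Rext (fun k => (qint Q (S m) * x) * PB (S m) k)).
  - intros k. rewrite Ib1. ring.
  - apply is_series_Rscal. apply PB_series.
Qed.

Lemma PB_b2 m : is_series (fun k => PB m k * b2 k) (qint Q (S m) * qint Q (S (S m)) * x ^ 2).
Proof.
  apply is_series_shift. apply is_series_shift.
  replace (qint Q (S m) * qint Q (S (S m)) * x ^ 2 - PB m 0 * b2 0 - PB m 1 * b2 1)
    with ((qint Q (S m) * qint Q (S (S m)) * x ^ 2) * 1).
  2:{ unfold b2. rewrite qint_0. replace (qint Q 1) with 1 by (unfold qint; simpl; field; lra).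
      simpl; field. lra. }
  apply (is_series_Rext (fun k => (qint Q (S m) * qint Q (S (S m)) * x ^ 2) * PB (S (S m)) k)).
  - intros k. rewrite Ib2. ring.
  - apply is_series_Rscal. apply PB_series.
Qed.

End Bask.

Section Inner.
Variable Q : R.
Hypothesis HQ : 0 < Q < 1.

Definition W (k j : nat) : R := (Q ^ (S k)) ^ j * ee Q j / ((1 - Q) ^ k * qfact Q k).
Definition uu (k j : nat) : R := zz Q j / Q ^ k.
Definition m1 (k : nat) : R := Q * qint Q (S k) / Q ^ k.
Definition m2 (k : nat) : R := Q ^ 2 * qint Q (S k) * qint Q (S (S k)) / (Q ^ k) ^ 2.

Lemma GG_is k : is_series (fun j => (Q ^ (S k)) ^ j * ee Q j) ((1 - Q) ^ k * qfact Q k).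
Proof.
  rewrite <- (GG_T Q HQ k). unfold GG. apply Series_correct. apply geom_ee_ex; [exact HQ|].
  split. apply pow_le; lra. apply Rle_lt_trans with Q; [apply pow_le_q; [lra|lia]| lra].
Qed.

Lemma W_nonneg k j : 0 <= W k j.
Proof.
  unfold W. assert (h := ee_pos Q HQ j).
  assert (0 < (Q ^ S k) ^ j) by (apply pow_lt, pow_lt; lra).
  assert (0 < (1-Q)^k) by (apply pow_lt; lra).
  assert (0 < qfact Q k) by (apply qfact_pos; lra).
  apply Rlt_le, Rdiv_lt_0_compat; nra.
Qed.

Lemma W_sum k : is_series (W k) 1.
Proof.
  assert (0 < (1-Q)^k) by (apply pow_lt; lra).
  assert (0 < qfact Q k) by (apply qfact_pos; lra).
  apply (is_series_Rext (fun j => / ((1 - Q) ^ k * qfact Q k) * ((Q ^ (S k)) ^ j * ee Q j))).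
  - intros j. unfold W. field. lra.
  - assert (H1 := is_series_Rscal (/ ((1 - Q) ^ k * qfact Q k)) _ _ (GG_is k)).
    rewrite Rinv_l in H1 by nra. exact H1.
Qed.

Lemma W_u k : is_series (fun j => W k j * uu k j) (m1 k).
Proof.
  assert (0 < (1-Q)^k) by (apply pow_lt; lra).
  assert (0 < qfact Q k) by (apply qfact_pos; lra).
  assert (0 < Q ^ k) by (apply pow_lt; lra).
  set (c := Q / (Q ^ k * (1 - Q) ^ (S k) * qfact Q k)).
  apply (is_series_Rext (fun j => c * ((Q ^ (S (S k))) ^ j * ee Q j))).
  - intros j. unfold W, uu, zz, c. rewrite <- !pow_mult.
    replace (S (S k) * j)%nat with (S k * j + j)%nat by lia.
    replace (S j) with (j + 1)%nat by lia. rewrite !pow_add.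
    assert (0 < Q ^ j) by (apply pow_lt; lra).
    simpl. field. repeat split; lra.
  - replace (m1 k) with (c * ((1 - Q) ^ (S k) * qfact Q (S k))).
    + apply is_series_Rscal. apply GG_is.
    + unfold c, m1. rewrite qfact_S. simpl. field. repeat split; lra.
Qed.

Lemma W_u2 k : is_series (fun j => W k j * (uu k j) ^ 2) (m2 k).
Proof.
  assert (0 < (1-Q)^k) by (apply pow_lt; lra).
  assert (0 < qfact Q k) by (apply qfact_pos; lra).
  assert (0 < Q ^ k) by (apply pow_lt; lra).
  set (c := Q ^ 2 / ((Q ^ k) ^ 2 * (1 - Q) ^ (S (S k)) * qfact Q k)).
  apply (is_series_Rext (fun j => c * ((Q ^ (S (S (S k)))) ^ j * ee Q j))).
  - intros j. unfold W, uu, zz, c. rewrite <- !pow_mult.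
    replace (S (S (S k)) * j)%nat with (S k * j + j + j)%nat by lia.
    replace (S j) with (j + 1)%nat by lia. rewrite !pow_add.
    assert (0 < Q ^ j) by (apply pow_lt; lra).
    replace (Q ^ (k * 2)) with (Q ^ k * Q ^ k) by (rewrite <- pow_add; f_equal; lia).
    simpl. field. repeat split; lra.
  - replace (m2 k) with (c * ((1 - Q) ^ (S (S k)) * qfact Q (S (S k)))).
    + apply is_series_Rscal. apply GG_is.
    + unfold c, m2. rewrite !qfact_S. simpl. field. repeat split; lra.
Qed.

Lemma m1_b1 k : m1 k = Q + b1 Q k.
Proof.
  unfold m1, b1. rewrite qint_S by lra. assert (0 < Q ^ k) by (apply pow_lt; lra).
  unfold qint. field. split; lra.
Qed.

Lemma m2_b1b2 k : m2 k = Q ^ 2 * (1 + Q) + (1 + Q) ^ 2 * b1 Q k + b2 Q k / Q.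
Proof.
  unfold m2, b1, b2. rewrite (qint_S Q (S k)) by lra. rewrite (qint_S Q k) by lra.
  assert (0 < Q ^ k) by (apply pow_lt; lra).
  unfold qint. field. repeat split; lra.
Qed.

End Inner.

Section Mom.
Variable Q : R.
Hypothesis HQ : 0 < Q < 1.
Variables (N alpha beta x : R).
Hypothesis HNb : 0 < N + beta.

Definition vv (k j : nat) : R := (uu Q k j + alpha) / (N + beta).

Definition Ak (k : nat) : R :=
  (m2 Q k + 2 * alpha * m1 Q k + alpha ^ 2) / (N + beta) ^ 2 - 2 * x * (m1 Q k + alpha) / (N + beta) + x ^ 2.

Lemma W_Ak k : is_series (fun j => W Q k j * (vv k j - x) ^ 2) (Ak k).
Proof.
  set (a := / (N + beta) ^ 2).
  set (b := 2 * alpha / (N + beta) ^ 2 - 2 * x / (N + beta)).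
  set (c := alpha ^ 2 / (N + beta) ^ 2 - 2 * x * alpha / (N + beta) + x ^ 2).
  apply (is_series_Rext (fun j => (a * (W Q k j * (uu Q k j) ^ 2) + b * (W Q k j * uu Q k j)) + c * W Q k j)).
  - intros j. unfold vv, a, b, c. field. lra.
  - replace (Ak k) with ((a * m2 Q k + b * m1 Q k) + c * 1) by (unfold Ak, a, b, c; field; lra).
    apply is_series_Rplus; [apply is_series_Rplus|]; apply is_series_Rscal.
    + apply W_u2; exact HQ.
    + apply W_u; exact HQ.
    + apply W_sum; exact HQ.
Qed.

Variable m : nat.
Hypothesis Hx : 0 <= x.

Definition VL : R :=
  let N1 := qint Q (S m) in let M1 := qint Q (S (S m)) in
  ((Q ^ 2 * (1 + Q) + (1 + Q) ^ 2 * (N1 * x) + (N1 * M1 * x ^ 2) / Q) + 2 * alpha * (Q + N1 * x) + alpha ^ 2) / (N + beta) ^ 2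
  - 2 * x * (Q + N1 * x + alpha) / (N + beta) + x ^ 2.

Lemma PB_Ak : is_series (fun k => PB Q x m k * Ak k) VL.
Proof.
  set (a0 := (Q ^ 2 * (1 + Q) + 2 * alpha * Q + alpha ^ 2) / (N + beta) ^ 2 - 2 * x * (Q + alpha) / (N + beta) + x ^ 2).
  set (a1 := ((1 + Q) ^ 2 + 2 * alpha) / (N + beta) ^ 2 - 2 * x / (N + beta)).
  set (a2 := / Q / (N + beta) ^ 2).
  apply (is_series_Rext (fun k => (a0 * PB Q x m k + a1 * (PB Q x m k * b1 Q k)) + a2 * (PB Q x m k * b2 Q k))).
  - intros k. unfold Ak. rewrite m1_b1, m2_b1b2 by exact HQ. unfold a0, a1, a2. field. lra.
  - replace VL with ((a0 * 1 + a1 * (qint Q (S m) * x)) + a2 * (qint Q (S m) * qint Q (S (S m)) * x ^ 2)).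
    + apply is_series_Rplus; [apply is_series_Rplus|]; apply is_series_Rscal.
      * apply PB_series; lra.
      * apply PB_b1; lra.
      * apply PB_b2; lra.
    + unfold VL, a0, a1, a2. field. lra.
Qed.

End Mom.

Lemma VL_bound Q alpha beta x m :
  /2 <= Q < 1 -> 0 <= alpha -> 0 <= beta -> 0 <= x ->
  VL Q (qint Q (S m)) alpha beta x m <= (8 + beta ^ 2 + 4 * alpha + alpha ^ 2) * (1 + x ^ 2) / qint Q (S m).
Proof.
  intros HQ Ha Hb Hx.
  set (N := qint Q (S m)).
  assert (HN : 1 <= N) by (apply qint_ge1; [lra|lia]).
  assert (EM : qint Q (S (S m)) = 1 + Q * N) by (apply qint_S; lra).
  unfold VL. fold N. rewrite EM.
  set (D := (N + beta) ^ 2).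
  assert (HD : N ^ 2 <= D) by (unfold D; nra).
  assert (HD0 : 0 < D) by (unfold D; nra).
  set (V := (Q ^ 2 * (1 + Q) + (1 + Q) ^ 2 * (N * x) + N * (1 + Q * N) * x ^ 2 / Q + 2 * alpha * (Q + N * x) + alpha ^ 2) / D -
    2 * x * (Q + N * x + alpha) / (N + beta) + x ^ 2).
  assert (E : V * D = (N / Q + beta ^ 2) * x ^ 2 + ((1 + Q) ^ 2 * N + 2 * alpha * N - 2 * (Q + alpha) * (N + beta)) * x
                     + (Q ^ 2 * (1 + Q) + 2 * alpha * Q + alpha ^ 2)).
  { unfold V, D. field. lra. }
  assert (HNQ : N / Q <= 2 * N).
  { apply Rcomplements.Rle_div_l; [lra|nra]. }
  assert (B1 : V * D <= N * ((8 + beta ^ 2 + 4 * alpha + alpha ^ 2) * (1 + x ^ 2))).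
  { rewrite E.
    assert (0 <= x ^ 2) by nra.
    assert (x <= 1 + x ^ 2) by nra.
    assert (t1 : (N / Q + beta ^ 2) * x ^ 2 <= N * ((2 + beta ^ 2) * x ^ 2)).
    { assert (beta ^ 2 <= N * beta ^ 2) by nra. nra. }
    assert (t2 : ((1 + Q) ^ 2 * N + 2 * alpha * N - 2 * (Q + alpha) * (N + beta)) * x <= N * ((4 + 2 * alpha) * (1 + x ^ 2))).
    { assert (0 <= 2 * (Q + alpha) * (N + beta) * x) by (repeat apply Rmult_le_pos; lra).
      assert ((1 + Q) ^ 2 <= 4) by nra.
      assert (s1 : ((1 + Q) ^ 2 * N + 2 * alpha * N) * x <= ((4 + 2 * alpha) * N) * x).
      { apply Rmult_le_compat_r; [lra|]. nra. }
      assert (s2 : ((4 + 2 * alpha) * N) * x <= ((4 + 2 * alpha) * N) * (1 + x ^ 2)).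
      { apply Rmult_le_compat_l; [nra|lra]. }
      nra. }
    assert (t3 : Q ^ 2 * (1 + Q) + 2 * alpha * Q + alpha ^ 2 <= N * ((2 + 2 * alpha + alpha ^ 2) * (1 + x ^ 2))).
    { assert (Q ^ 2 * (1 + Q) <= 2) by nra.
      assert (0 <= (2 + 2 * alpha + alpha ^ 2)) by nra.
      assert (2 + 2 * alpha + alpha ^ 2 <= (2 + 2 * alpha + alpha ^ 2) * (1 + x ^ 2)) by nra.
      nra. }
    nra. }
  set (C := (8 + beta ^ 2 + 4 * alpha + alpha ^ 2) * (1 + x ^ 2)) in *.
  assert (0 <= C) by (unfold C; nra).
  assert (V <= N * C / D) by (apply Rcomplements.Rle_div_r; lra).
  assert (N * C / D <= N * C / N ^ 2).
  { unfold Rdiv. apply Rmult_le_compat_l; [nra|]. apply Rinv_le_contravar; nra. }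
  replace (N * C / N ^ 2) with (C / N) in * by (field; lra).
  lra.
Qed.

Section Main.
Variables (alpha beta : R) (f : R -> R) (Mf Q : R) (m : nat) (x : R).
Hypothesis HQ : 0 < Q < 1.
Hypothesis Ha : 0 <= alpha.
Hypothesis Hb : 0 <= beta.
Hypothesis Hx : 0 <= x.
Hypothesis Hf : forall u, 0 <= u -> Rabs (f u) <= Mf.

Let N := qint Q (S m).
Let AA := Q / (1 - Q ^ (S m)).

Lemma HN1 : 1 <= N.
Proof. apply qint_ge1; [lra|lia]. Qed.

Lemma HQn : 0 < 1 - Q ^ (S m).
Proof. assert (Q ^ S m <= Q) by (apply pow_le_q; [lra|lia]). lra. Qed.

Lemma NA j : N * (AA * Q ^ j) = zz Q j.
Proof.
  unfold N, AA, zz, qint. assert (H := HQn). simpl in *. field. split; lra.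
Qed.

Definition gk (k : nat) : R -> R := fun t =>
  / Q ^ (k + 1) * s_q Q (S m) k t * f ((qint Q (S m) * t / Q ^ k + alpha) / (qint Q (S m) + beta)).

Lemma vv_nonneg k j : 0 <= vv Q N alpha beta k j.
Proof.
  unfold vv, uu. assert (H := zz_pos Q HQ j). assert (0 < Q ^ k) by (apply pow_lt; lra).
  assert (HN := HN1).
  apply Rmult_le_pos; [| apply Rlt_le, Rinv_0_lt_compat; lra].
  assert (0 <= zz Q j / Q ^ k) by (apply Rlt_le, Rdiv_lt_0_compat; lra). lra.
Qed.

Lemma term_eq k j : Q * (gk k (AA * Q ^ j) * Q ^ j) = W Q k j * f (vv Q N alpha beta k j).
Proof.
  unfold gk, s_q. fold N.
  rewrite NA. rewrite <- Ropp_mult_distr_l. rewrite NA.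
  replace ((zz Q j / Q ^ k + alpha) / (N + beta)) with (vv Q N alpha beta k j) by reflexivity.
  fold (ee Q j).
  unfold W, zz. rewrite <- !pow_mult.
  assert (0 < Q ^ k) by (apply pow_lt; lra).
  assert (0 < Q ^ j) by (apply pow_lt; lra).
  assert (0 < (1-Q)^k) by (apply pow_lt; lra).
  assert (0 < qfact Q k) by (apply qfact_pos; lra).
  unfold Rdiv. rewrite Rpow_mult_distr, pow_inv, <- pow_mult.
  replace (S k * j)%nat with (k * j + j)%nat by lia.
  replace (S j * k)%nat with (k * j + k)%nat by lia.
  rewrite !pow_add. simpl. field. repeat split; lra.
Qed.

Lemma Wf_ex k : ex_series (fun j => W Q k j * f (vv Q N alpha beta k j)).
Proof.
  apply (ex_series_Rle _ (fun j => Mf * W Q k j)).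
  - intros j. rewrite Rabs_mult. rewrite (Rabs_pos_eq (W Q k j)) by (apply W_nonneg; exact HQ).
    assert (h := Hf _ (vv_nonneg k j)). assert (h2 := W_nonneg Q HQ k j). nra.
  - exists (Mf * 1). apply is_series_Rscal. apply W_sum; exact HQ.
Qed.

Definition Fk (k : nat) : R := Series (fun j => W Q k j * f (vv Q N alpha beta k j)).

Lemma Fk_bound k : Rabs (Fk k) <= Mf.
Proof.
  unfold Fk. replace Mf with (Mf * 1) by ring.
  apply (is_series_Rabs_le (fun j => W Q k j * f (vv Q N alpha beta k j)) (fun j => Mf * W Q k j)).
  - apply Series_correct, Wf_ex.
  - apply is_series_Rscal. apply W_sum; exact HQ.
  - intros j. rewrite Rabs_mult. rewrite (Rabs_pos_eq (W Q k j)) by (apply W_nonneg; exact HQ).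
    assert (h := Hf _ (vv_nonneg k j)). assert (h2 := W_nonneg Q HQ k j). nra.
Qed.

Lemma jackson_eq k : N * jackson Q AA (gk k) = Fk k.
Proof.
  unfold jackson.
  assert (Hs : is_series (fun j => gk k (AA * Q ^ j) * Q ^ j) (/ Q * Fk k)).
  { apply (is_series_Rext (fun j => / Q * (W Q k j * f (vv Q N alpha beta k j)))).
    - intros j. rewrite <- term_eq. field. lra.
    - apply is_series_Rscal. apply Series_correct, Wf_ex. }
  rewrite (series_val_is _ _ Hs).
  unfold N, AA, qint. assert (H := HQn). field. repeat split; lra.
Qed.

Lemma D_is : is_series (fun k => PB Q x m k * Fk k) (D_op alpha beta f Q (S m) x).
Proof.
  assert (HN := HN1).
  assert (Hex : ex_series (fun k => PB Q x m k * Fk k)).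
  { apply (ex_series_Rle _ (fun k => Mf * PB Q x m k)).
    - intros k. rewrite Rabs_mult, (Rabs_pos_eq (PB Q x m k)) by (apply PB_nonneg; lra).
      assert (h := Fk_bound k). assert (h2 := PB_nonneg Q x HQ Hx m k). nra.
    - exists (Mf * 1). apply is_series_Rscal. apply PB_series; lra. }
  unfold D_op.
  assert (Hs : is_series (fun k => p_q Q (S m) k x * jackson Q (Q / (1 - Q ^ S m)) (gk k))
                 (/ N * Series (fun k => PB Q x m k * Fk k))).
  { apply (is_series_Rext (fun k => / N * (PB Q x m k * Fk k))).
    - intros k. rewrite p_q_PB. rewrite <- (jackson_eq k). unfold AA, gk. field. lra.
    - apply is_series_Rscal. apply Series_correct, Hex. }
  unfold gk in Hs. rewrite (series_val_is _ _ Hs). fold N.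
  replace (N * (/ N * Series (fun k : nat => PB Q x m k * Fk k))) with (Series (fun k : nat => PB Q x m k * Fk k)) by (field; lra).
  apply Series_correct, Hex.
Qed.

Lemma main_est (a b : R) : 0 <= a -> 0 <= b ->
  (forall u, 0 <= u -> Rabs (f u - f x) <= a + b * (u - x) ^ 2) ->
  Rabs (D_op alpha beta f Q (S m) x - f x) <= a + b * VL Q N alpha beta x m.
Proof.
  intros Ha0 Hb0 Hu. assert (HN := HN1).
  assert (HNb : 0 < N + beta) by lra.
  assert (Hin : forall k, Rabs (Fk k - f x) <= a + b * Ak Q N alpha beta x k).
  { intros k.
    assert (H1 : is_series (fun j => W Q k j * f (vv Q N alpha beta k j) + (- f x) * W Q k j) (Fk k + (- f x) * 1)).
    { apply is_series_Rplus. apply Series_correct, Wf_ex. apply is_series_Rscal, W_sum; exact HQ. }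
    assert (H2 : is_series (fun j => a * W Q k j + b * (W Q k j * (vv Q N alpha beta k j - x) ^ 2)) (a * 1 + b * Ak Q N alpha beta x k)).
    { apply is_series_Rplus; apply is_series_Rscal. apply W_sum; exact HQ. apply W_Ak; [exact HQ| exact HNb]. }
    replace (Fk k - f x) with (Fk k + - f x * 1) by ring.
    replace (a + b * Ak Q N alpha beta x k) with (a * 1 + b * Ak Q N alpha beta x k) by ring.
    apply (is_series_Rabs_le _ _ _ _ H1 H2).
    intros j. assert (hw := W_nonneg Q HQ k j). assert (hu := Hu _ (vv_nonneg k j)).
    replace (W Q k j * f (vv Q N alpha beta k j) + - f x * W Q k j) with (W Q k j * (f (vv Q N alpha beta k j) - f x)) by ring.
    rewrite Rabs_mult, (Rabs_pos_eq (W Q k j)) by lra.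
    replace (a * W Q k j + b * (W Q k j * (vv Q N alpha beta k j - x) ^ 2)) with (W Q k j * (a + b * (vv Q N alpha beta k j - x) ^ 2)) by ring.
    apply Rmult_le_compat_l; lra. }
  assert (H1 : is_series (fun k => PB Q x m k * Fk k + (- f x) * PB Q x m k) (D_op alpha beta f Q (S m) x + (- f x) * 1)).
  { apply is_series_Rplus. apply D_is. apply is_series_Rscal, PB_series; lra. }
  assert (H2 : is_series (fun k => a * PB Q x m k + b * (PB Q x m k * Ak Q N alpha beta x k)) (a * 1 + b * VL Q N alpha beta x m)).
  { apply is_series_Rplus; apply is_series_Rscal. apply PB_series; lra. apply PB_Ak; [exact HQ| exact HNb| exact Hx]. }
  replace (D_op alpha beta f Q (S m) x - f x) with (D_op alpha beta f Q (S m) x + - f x * 1) by ring.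
  replace (a + b * VL Q N alpha beta x m) with (a * 1 + b * VL Q N alpha beta x m) by ring.
  apply (is_series_Rabs_le _ _ _ _ H1 H2).
  intros k. assert (hp := PB_nonneg Q x HQ Hx m k). assert (hk := Hin k).
  replace (PB Q x m k * Fk k + - f x * PB Q x m k) with (PB Q x m k * (Fk k - f x)) by ring.
  rewrite Rabs_mult, (Rabs_pos_eq (PB Q x m k)) by lra.
  replace (a * PB Q x m k + b * (PB Q x m k * Ak Q N alpha beta x k)) with (PB Q x m k * (a + b * Ak Q N alpha beta x k)) by ring.
  apply Rmult_le_compat_l; lra.
Qed.

End Main.

Lemma indic_bounds (P : Prop) : 0 <= indic P <= 1.
Proof. unfold indic. destruct (excluded_middle_informative P); lra. Qed.

Lemma indic_union (P P1 P2 : Prop) : (P -> P1 \/ P2) -> indic P <= indic P1 + indic P2.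
Proof.
  intros H. unfold indic.
  destruct (excluded_middle_informative P) as [h|h];
  destruct (excluded_middle_informative P1) as [h1|h1];
  destruct (excluded_middle_informative P2) as [h2|h2]; try lra.
  destruct (H h); tauto.
Qed.

Lemma density_union (K K1 K2 : nat -> Prop) :
  density_zero K1 -> density_zero K2 ->
  (forall n, (1 <= n)%nat -> K n -> K1 n \/ K2 n) -> density_zero K.
Proof.
  unfold density_zero. intros H1 H2 H.
  apply is_lim_seq_Reals in H1. apply is_lim_seq_Reals in H2. apply is_lim_seq_Reals.
  apply (is_lim_seq_le_le (fun _ => 0) _
    (fun n => sum_f_R0 (fun j => indic (K1 (S j))) (pred n) / INR n + sum_f_R0 (fun j => indic (K2 (S j))) (pred n) / INR n)).
  - intros n. assert (Hn : 0 <= / INR n).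
    { destruct n. simpl. rewrite Rinv_0. lra. apply Rlt_le, Rinv_0_lt_compat, lt_0_INR. lia. }
    split.
    + unfold Rdiv. apply Rmult_le_pos; [|exact Hn].
      apply cond_pos_sum. intros j. apply indic_bounds.
    + unfold Rdiv. rewrite <- Rmult_plus_distr_r. apply Rmult_le_compat_r; [exact Hn|].
      rewrite <- sum_plus. apply sum_Rle. intros j _. apply indic_union. apply H. lia.
  - apply is_lim_seq_const.
  - replace (Finite 0) with (Finite (0 + 0)) by (f_equal; ring).
    apply is_lim_seq_plus'; assumption.
Qed.

Lemma unif_cont_nonneg (f : R -> R) (B : R) :
  (forall x, 0 <= x -> limit1_in f (fun y => 0 <= y) (f x) x) ->
  forall e, 0 < e -> exists d, 0 < d /\
    forall x y, 0 <= x <= B -> 0 <= y <= B -> Rabs (y - x) < d -> Rabs (f y - f x) < e.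
Proof.
  intros Hc e He.
  set (g := fun y => f (Rmax 0 y)).
  assert (Hg : forall x, 0 <= x <= B -> continuous g x).
  { intros x Hx. apply continuity_pt_filterlim.
    intros eps Heps. destruct (Hc x (proj1 Hx) eps Heps) as [alp [Halp Hal]].
    exists alp. split; [exact Halp|]. intros y [_ Hy].
    unfold g. rewrite (Rmax_right 0 x) by lra.
    apply Hal. split. apply Rmax_l.
    simpl in *. unfold R_dist in *.
    assert (Rabs (Rmax 0 y - x) <= Rabs (y - x)).
    { unfold Rmax. destruct (Rle_dec 0 y). lra.
      rewrite !Rabs_left1 by lra. lra. }
    lra. }
  destruct (unifcont_normed_1d g 0 B Hg (mkposreal e He)) as [d Hd].
  exists d. split; [apply cond_pos|].
  intros x y Hx Hy Hxy.
  assert (Hb : ball x d y) by exact Hxy.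
  assert (H := Hd x y Hx Hy Hb).
  unfold g in H. rewrite (Rmax_right 0 x), (Rmax_right 0 y) in H by lra. exact H.
Qed.

Theorem theorem3 (alpha beta a : R) (q : nat -> R) (f : R -> R) :
  0 <= alpha -> alpha <= beta ->
  (forall n, 0 < q n < 1) ->
  st_cv q 1 ->
  st_cv (fun n => q n ^ n) a -> a < 1 ->
  st_cv (fun n => 1 / qint (q n) n) 0 ->
  bounded_cont_nonneg f ->
  forall eps, eps > 0 ->
    density_zero (fun n =>
      ~ rho0_norm_lt (fun x => D_op alpha beta f (q n) n x - f x) eps).
Proof.
  intros Ha Hab Hq Hq1 _ _ Hqn [[Mf HM] Hc] eps Heps.
  assert (HM0 : 0 <= Mf) by (assert (h := HM 0 (Rle_refl 0)); assert (h2 := Rabs_pos (f 0)); lra).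
  set (R0 := 8 * Mf / eps + 1).
  assert (HR0 : 1 <= R0) by (unfold R0; assert (0 <= 8 * Mf / eps) by (apply Rcomplements.Rdiv_le_0_compat; lra); lra).
  assert (HR0' : 8 * Mf <= eps * R0).
  { unfold R0. replace (eps * (8 * Mf / eps + 1)) with (8 * Mf + eps) by (field; lra). lra. }
  destruct (unif_cont_nonneg f (R0 + 1) Hc (eps / 4)) as [d [Hd Hud]]; [lra|].
  set (d' := Rmin d 1).
  assert (Hd' : 0 < d' <= d) by (unfold d'; split; [apply Rmin_pos; lra| apply Rmin_l]).
  assert (Hd1 : d' <= 1) by (unfold d'; apply Rmin_r).
  set (b := 2 * Mf / d' ^ 2).
  assert (Hb0 : 0 <= b) by (unfold b; apply Rcomplements.Rdiv_le_0_compat; nra).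
  set (C := 8 + beta ^ 2 + 4 * alpha + alpha ^ 2).
  assert (HC : 0 <= C) by (unfold C; nra).
  set (N0 := 4 * b * C / eps + 1).
  assert (HN0 : 1 <= N0) by (unfold N0; assert (0 <= 4 * b * C / eps) by (apply Rcomplements.Rdiv_le_0_compat; nra); lra).
  apply (density_union _ (fun n => Rabs (q n - 1) >= /2) (fun n => Rabs (1 / qint (q n) n - 0) >= / N0)).
  - apply Hq1; lra.
  - apply Hqn. apply Rinv_0_lt_compat; lra.
  - intros n Hn Hbad. destruct n as [|m]; [lia|].
    destruct (Rlt_or_le (Rabs (q (S m) - 1)) (/2)) as [h1|h1]; [|left; lra].
    destruct (Rlt_or_le (Rabs (1 / qint (q (S m)) (S m) - 0)) (/ N0)) as [h2|h2]; [|right; lra].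
    exfalso. apply Hbad.
    set (Q := q (S m)) in *.
    assert (HQ : 0 < Q < 1) by apply Hq.
    assert (HQ2 : / 2 <= Q) by (apply Rabs_def2 in h1; lra).
    set (N := qint Q (S m)) in *.
    assert (HN : 1 <= N) by (apply qint_ge1; [lra|lia]).
    assert (HNN0 : N0 < N).
    { rewrite Rminus_0_r, Rabs_pos_eq in h2 by (apply Rlt_le, Rdiv_lt_0_compat; lra).
      apply Rinv_lt_cancel; [lra|]. unfold Rdiv in h2. rewrite Rmult_1_l in h2. exact h2. }
    assert (HbC : b * C / N <= eps / 4).
    { apply Rcomplements.Rle_div_l; [lra|].
      assert (4 * b * C <= eps * (N0 - 1)).
      { unfold N0. replace (eps * (4 * b * C / eps + 1 - 1)) with (4 * b * C) by (field; lra). lra. }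
      nra. }
    exists (eps / 2). split; [lra|].
    intros x Hx.
    assert (Hx2 : 0 < 1 + x ^ 2) by nra.
    apply Rcomplements.Rle_div_l; [exact Hx2|].
    destruct (Rle_or_lt x R0) as [hx|hx].
    + assert (Hest := main_est alpha beta f Mf Q m x HQ Ha (Rle_trans _ _ _ Ha Hab) Hx HM (eps/4) b
                        ltac:(lra) Hb0).
      assert (Hu : forall u, 0 <= u -> Rabs (f u - f x) <= eps / 4 + b * (u - x) ^ 2).
      { intros u Hu. destruct (Rlt_or_le (Rabs (u - x)) d') as [k|k].
        - assert (Rabs (f u - f x) < eps / 4).
          { apply Hud; try lra. apply Rabs_def2 in k. lra. }
          assert (0 <= b * (u - x) ^ 2) by (apply Rmult_le_pos; [lra| apply pow2_ge_0]). lra.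
        - assert (Rabs (f u - f x) <= 2 * Mf).
          { unfold Rminus. apply Rle_trans with (Rabs (f u) + Rabs (- f x)); [apply Rabs_triang|].
            rewrite Rabs_Ropp. assert (h3 := HM u Hu). assert (h4 := HM x Hx). lra. }
          assert (d' ^ 2 <= (u - x) ^ 2).
          { rewrite <- (pow2_abs (u - x)). assert (0 <= Rabs (u - x)) by apply Rabs_pos. nra. }
          assert (b * d' ^ 2 = 2 * Mf) by (unfold b; field; lra).
          assert (b * d' ^ 2 <= b * (u - x) ^ 2) by (apply Rmult_le_compat_l; lra).
          lra. }
      specialize (Hest Hu).
      assert (HV := VL_bound Q alpha beta x m (conj HQ2 (proj2 HQ)) Ha (Rle_trans _ _ _ Ha Hab) Hx).
      fold N in HV, Hest. fold C in HV.
      assert (b * VL Q N alpha beta x m <= b * (C * (1 + x ^ 2) / N)) by (apply Rmult_le_compat_l; lra).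
      replace (b * (C * (1 + x ^ 2) / N)) with ((b * C / N) * (1 + x ^ 2)) in H by (field; lra).
      assert ((b * C / N) * (1 + x ^ 2) <= eps / 4 * (1 + x ^ 2)) by (apply Rmult_le_compat_r; lra).
      assert (eps / 4 <= eps / 4 * (1 + x ^ 2)) by nra.
      lra.
    + assert (Hest := main_est alpha beta f Mf Q m x HQ Ha (Rle_trans _ _ _ Ha Hab) Hx HM (2 * Mf) 0
                        ltac:(lra) ltac:(lra)).
      assert (Hu : forall u, 0 <= u -> Rabs (f u - f x) <= 2 * Mf + 0 * (u - x) ^ 2).
      { intros u Hu. rewrite Rmult_0_l, Rplus_0_r.
        unfold Rminus. apply Rle_trans with (Rabs (f u) + Rabs (- f x)); [apply Rabs_triang|].
        rewrite Rabs_Ropp. assert (h3 := HM u Hu). assert (h4 := HM x Hx). lra. }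
      specialize (Hest Hu). rewrite Rmult_0_l, Rplus_0_r in Hest.
      assert (eps * R0 <= eps * x) by (apply Rmult_le_compat_l; lra).
      assert (x <= 1 + x ^ 2) by nra.
      assert (eps * x <= eps * (1 + x ^ 2)) by (apply Rmult_le_compat_l; lra).
      lra.
Qed.
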